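(* Fix a finite alphabet $\Sigma$. For every $C_7\in\mathbb{N}$ there exists $C_9$, bounded by a polynomial in $C_7$ (the polynomial depending only on $|\Sigma|$), such that the following holds. Let $P,Q\subseteq[0..C_7]^\Sigma$ with $0\notin P$, $0\notin Q$, and $\bigoplus_{\mathbb{P}}P\cap\bigoplus_{\mathbb{P}}Q=\{0\}$. Then there is a linear function $\Phi:\mathbb{Q}^\Sigma\to\mathbb{Q}$ with integer coefficients, $\Phi(x)=\sum_{\sigma\in\Sigma}\phi_\sigma x_\sigma$ with $\phi\in\mathbb{Z}^\Sigma$, such that $\Phi(p)>0$ for all $p\in P$, $\Phi(q)<0$ for all $q\in Q$, and $\sum_\sigma|\phi_\sigma|\le C_9$.
   Context: $[0..C]=\{0,1,\ldots,C\}$; $\mathbb{P}$ is the set of non-negative rationals; for a set $B$ of vectors, $\bigoplus_{\mathbb{P}}B=\{\sum_{b\in B}\alpha_b b:\alpha_b\in\mathbb{P}\text{ for all } b\in B\}$. *)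

(* Defs.v *)
From HB Require Import structures.
From mathcomp Require Import all_boot all_order all_algebra.
Set Implicit Arguments. Unset Strict Implicit. Unset Printing Implicit Defensive.
Import Order.TTheory GRing.Theory Num.Theory.
Local Open Scope ring_scope.

Definition zvec (S : finType) : {ffun S -> nat} := [ffun => 0%N].

Definition pcone (S : finType) (B : {ffun S -> nat} -> Prop) (x : S -> rat) : Prop :=
  exists s : seq ({ffun S -> nat} * rat),
    (forall pa, pa \in s -> B pa.1 /\ 0 <= pa.2) /\
    forall a : S, x a = \sum_(pa <- s) pa.2 * (pa.1 a)%:R.

Definition linval (S : finType) (phi : S -> int) (p : {ffun S -> nat}) : int :=
  \sum_(a : S) phi a * (p a)%:Z.

(* Main.v *)
Require Import Defs.
From mathcomp Require Import all_boot all_order all_algebra zify ring lra.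
From Stdlib Require Import Classical.
Import Order.TTheory GRing.Theory Num.Theory.
Local Open Scope ring_scope.

Definition dot (n : nat) (phi v : nat -> int) : int := \sum_(i < n) phi i * v i.

Fixpoint dd (n : nat) : nat := if n is m.+1 then (dd m * 2 + 3)%N else 0%N.
Fixpoint cc (n : nat) : nat := if n is m.+1 then (cc m * 2 ^ (dd m) + 1)%N else 0%N.

Lemma least_ex (P : nat -> Prop) n : P n -> exists m, P m /\ forall k, (k < m)%N -> ~ P k.
Proof.
elim: n {-2}n (leqnn n) => [|N IH] n hn Pn.
  exists n; split => // k hk; lia.
case: (classic (exists k, (k < n)%N /\ P k)) => [[k [hk Pk]]|H].
  apply: (IH k) => //; lia.
exists n; split => // k hk Pk; apply: H; exists k; done.
Qed.

Lemma sum_nseq k (u : nat -> int) i : \sum_(v <- nseq k u) v i = k%:Z * u i.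
Proof.
elim: k => [|k IH]; first by rewrite big_nil mul0r.
by rewrite /= big_cons IH -addn1 PoszD mulrDl mul1r addrC.
Qed.

Lemma dot_bound n (psi v : nat -> int) (C : nat) :
  (forall i, `|v i| <= C%:Z) ->
  `|dot n psi v| <= (\sum_(i < n) `|psi i|%N)%:Z * C%:Z.
Proof.
move=> hv; rewrite /dot (le_trans (ler_norm_sum _ _ _)) //.
rewrite -[X in X * _]natz natr_sum mulr_suml; apply: ler_sum => i _.
rewrite normrM natz abszE; apply: ler_wpM2l => //.
Qed.

Lemma dot_lin n (phi u w : nat -> int) (a b : int) :
  dot n phi (fun i => a * u i + b * w i) = a * dot n phi u + b * dot n phi w.
Proof.
rewrite /dot !mulr_sumr -big_split /=; apply: eq_bigr => i _; ring.
Qed.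

Lemma In_nseq {T} {k} {u v : T} : List.In v (nseq k u) -> v = u.
Proof. by elim: k => //= k IH [->|/IH]. Qed.

Definition comb (n : nat) (u w : nat -> int) : nat -> int :=
  fun i => (- w n) * u i + u n * w i.

Lemma lift_list n (V : (nat -> int) -> Prop) (s' : seq (nat -> int)) :
  (forall v, List.In v s' -> (V v /\ v n = 0) \/
      exists u w, [/\ V u, V w, 0 < u n, w n < 0 & v = comb n u w]) ->
  exists s : seq (nat -> int), (forall v, List.In v s -> V v) /\
    (s' <> [::] -> s <> [::]) /\
    forall i, \sum_(v <- s) v i = \sum_(v <- s') v i.
Proof.
elim: s' => [|x s' IH] hs.
  by exists [::]; split => //.
have [s [hs1 [_ hs3]]] : exists s : seq (nat -> int), (forall v, List.In v s -> V v) /\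
    (s' <> [::] -> s <> [::]) /\
    forall i, \sum_(v <- s) v i = \sum_(v <- s') v i.
  by apply: IH => v hv; apply: hs; right.
case: (hs x (or_introl erefl)) => [[Vx _]|[u [w [Vu Vw hu hw ->]]]].
  exists (x :: s); split; first by move=> v [<-|/hs1].
  split => // i; by rewrite !big_cons hs3.
exists (nseq `|w n|%N u ++ nseq `|u n|%N w ++ s); split.
  move=> v /List.in_app_iff [|/List.in_app_iff [|]].
  - by move=> h; rewrite (In_nseq h).
  - by move=> h; rewrite (In_nseq h).
  - exact: hs1.
split.
  have : (0 < `|w n|)%N by lia.
  by case: `|w n|%N.
move=> i; rewrite !big_cat /= !sum_nseq big_cons hs3 /comb !abszE.
rewrite (ltr0_norm hw) (gtr0_norm hu); ring.
Qed.

Lemma sum0_In n (s : seq (nat -> int)) :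
  (forall v, List.In v s -> v n = 0) -> \sum_(v <- s) v n = 0.
Proof.
elim: s => [|x s IH] h; first by rewrite big_nil.
by rewrite big_cons h ?IH ?add0r // => [v hv|]; [apply: h; right|left].
Qed.

Lemma comb_bound n (u w : nat -> int) (C : nat) i :
  (forall i, `|u i| <= C%:Z) -> (forall i, `|w i| <= C%:Z) ->
  `|comb n u w i| <= (2 * C * C)%N%:Z.
Proof.
move=> hu hw; rewrite /comb (le_trans (ler_normD _ _)) // !normrM normrN.
have -> : (2 * C * C)%N%:Z = C%:Z * C%:Z + C%:Z * C%:Z by lia.
by apply: lerD; apply: ler_pM.
Qed.

Lemma leq_expl m n e : (m <= n)%N -> (m ^ e <= n ^ e)%N.
Proof. by move=> h; elim: e => // e IH; rewrite !expnS leq_mul. Qed.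

Lemma arith_aux C S cc T E : (S <= cc*T*(E*E))%N -> (1 <= E)%N ->
 ((C*C+1)*S + ((C*C+1)*S*C+1) <= (cc*T+1)*(E*E*((C+1)*(C+1)*(C+1))))%N.
Proof.
move=> h1 h2.
set A := ((C+1)*(C+1)*(C+1))%N.
have h3 : ((C*C+1)*(C+1) * S <= A * (cc*T*(E*E)))%N.
  apply: leq_mul => //; rewrite /A; nia.
have h4 : (1 <= E*E*A)%N by rewrite /A; nia.
have -> : ((C*C+1)*S + ((C*C+1)*S*C+1) = (C*C+1)*(C+1) * S + 1)%N by ring.
have -> : ((cc*T+1)*(E*E*A) = A * (cc*T*(E*E)) + E*E*A)%N by ring.
exact: leq_add.
Qed.

Lemma bound_step n C S : (S <= cc n * (2*C*C).+1 ^ dd n)%N ->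
  ((C*C+1)*S + ((C*C+1)*S*C+1) <= cc n.+1 * C.+1 ^ dd n.+1)%N.
Proof.
move=> hS.
have hE : (1 <= C.+1 ^ dd n)%N by rewrite expn_gt0.
have -> : (cc n.+1 * C.+1 ^ dd n.+1 = (cc n * 2 ^ dd n + 1) *
   (C.+1 ^ dd n * C.+1 ^ dd n * ((C+1)*(C+1)*(C+1))))%N.
  rewrite /= expnD expnM -addn1 expnS expnS expnS expn0 muln1 expnS expn1; ring.
apply: arith_aux hE.
apply: (leq_trans hS); rewrite -!mulnA leq_mul2l; apply/orP; right.
have h : ((2*C*C).+1 <= 2 * (C.+1 * C.+1))%N by nia.
have := leq_expl _ _ (dd n) h; rewrite !expnMn.
by rewrite !mulnA.
Qed.

Lemma FM n : forall (C : nat) (V : (nat -> int) -> Prop),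
  (forall v, V v -> forall i, `|v i| <= C%:Z) ->
  (forall s : seq (nat -> int), (forall v, List.In v s -> V v) -> s <> [::] ->
     exists i, (i < n)%N /\ \sum_(v <- s) v i != 0) ->
  exists phi : nat -> int, (\sum_(i < n) `|phi i| <= cc n * C.+1 ^ dd n)%N /\
     forall v, V v -> 1 <= dot n phi v.
Proof.
elim: n => [|n IH] C V hb hc.
  exists (fun _ => 0); split; first by rewrite big_ord0.
  move=> v Vv; have [i [hi _]] := hc [:: v] (fun w hw => match hw with or_introl e => eq_ind v V Vv w e | or_intror f => match f with end end) (fun e => match e with end).
  by [].
pose V' := fun v => (V v /\ v n = 0) \/
      exists u w, [/\ V u, V w, 0 < u n, w n < 0 & v = comb n u w].
have hb' : forall v, V' v -> forall i, `|v i| <= (2 * C * C)%N%:Z.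
  move=> v [[Vv _]|[u [w [Vu Vw _ _ ->]]]] i; last by apply: comb_bound => j; apply: hb.
  apply: (le_trans (hb v Vv i)); rewrite lez_nat; nia.
have hc' : forall s : seq (nat -> int), (forall v, List.In v s -> V' v) -> s <> [::] ->
     exists i, (i < n)%N /\ \sum_(v <- s) v i != 0.
  move=> s hs hne; have [s0 [h1 [h2 h3]]] := @lift_list n V s hs.
  have [i [hi]] := hc s0 h1 (h2 hne); rewrite h3 => hne0.
  exists i; split => //.
  have : i != n.
    apply/negP => /eqP ei; move: hne0; rewrite ei sum0_In // => v /hs.
    move=> [[_ ->]|[u [w [_ _ hu hw ->]]]] //; rewrite /comb /=; ring.
  lia.
have [psi [hpsi hdot]] := IH (2 * C * C)%N V' hb' hc'.
set S := (\sum_(i < n) `|psi i|)%N in hpsi.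
set k := (C * C + 1)%N.
set M := (k * S * C + 1)%N.
have hkd : forall v, V v -> - M%:Z < k%:Z * dot n psi v < M%:Z.
  move=> v Vv; rewrite -ltr_norml normrM.
  have := @dot_bound n psi v C (hb v Vv); rewrite -/S => h.
  have : `|k%:Z| * `|dot n psi v| <= k%:Z * (S%:Z * C%:Z) by apply: ler_wpM2l.
  rewrite /M; lia.
pose Plow := fun s : nat => forall u, V u -> 0 < u n -> 0 < u n * (s%:Z - M%:Z) + k%:Z * dot n psi u.
have P2M : Plow (2 * M)%N.
  move=> u Vu hu; have := hkd u Vu; nia.
have [s0 [Ps0 hmin]] := @least_ex Plow _ P2M.
have s0le : (s0 <= 2 * M)%N.
  rewrite leqNgt; apply/negP => h; exact: (hmin _ h P2M).
set t := s0%:Z - M%:Z.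
exists (fun i => if i == n then t else k%:Z * psi i).
have hdotf : forall v, dot n.+1 (fun i => if i == n then t else k%:Z * psi i) v
   = k%:Z * dot n psi v + t * v n.
  move=> v; rewrite /dot big_ord_recr /= eqxx mulr_sumr; congr (_ + _).
  by apply: eq_bigr => i _; rewrite (ltn_eqF (ltn_ord i)) mulrA.
split.
  rewrite big_ord_recr /= eqxx.
  rewrite (eq_bigr (fun i : 'I_n => (k * `|psi i|)%N)); last first.
    by move=> i _; rewrite /= (ltn_eqF (ltn_ord i)) abszM.
  rewrite -big_distrr /= -/S.
  apply: leq_trans (@bound_step n C S hpsi); rewrite -/k -/M leq_add2l /t.
  lia.
move=> v Vv; rewrite hdotf.
have hvb := hb v Vv n.
have hK : (1 <= k)%N by rewrite /k addn1.
case: (ltrgtP (v n) 0) => hvn.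
- have [s00|s0pos] := eqVneq s0 0%N.
    have := hkd v Vv; rewrite /t s00; nia.
  have nP := hmin s0.-1 (ltac:(lia)).
  have [u hu] := not_all_ex_not _ _ nP.
  have [Vu hu2] := imply_to_and _ _ hu.
  have [hun hneg] := imply_to_and _ _ hu2.
  have hcomb := hdot (comb n u v) (or_intror (ex_intro _ u (ex_intro _ v (And5 Vu Vv hun hvn erefl)))).
  rewrite /comb dot_lin in hcomb.
  have hub := hb u Vu n.
  have hneg' : u n * ((s0.-1)%:Z - M%:Z) + k%:Z * dot n psi u <= 0.
    by rewrite leNgt; apply/negP.
  have e1 : (s0.-1)%:Z = s0%:Z - 1 by lia.
  rewrite e1 -/t in hneg'.
  have ha : u n <= C%:Z by move: hub; rewrite ger0_norm // ltW.
  have hb2 : - v n <= C%:Z by move: hvb; rewrite ltr0_norm.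
  have G1 : (- v n) * (u n * (t - 1) + k%:Z * dot n psi u) <= 0.
    apply: mulr_ge0_le0 => //; lia.
  have G2 : k%:Z <= k%:Z * ((- v n) * dot n psi u + u n * dot n psi v).
    by rewrite -[X in X <= _]mulr1 ler_wpM2l.
  have G3 : u n * (- v n) <= C%:Z * C%:Z by apply: ler_pM => //; [exact: ltW | rewrite oppr_ge0 ltW].
  have Kd : k%:Z = C%:Z * C%:Z + 1 by rewrite /k; lia.
  rewrite Kd in G2 *.
  nia.
- have := Ps0 v Vv hvn; rewrite -/t; lia.
- have := hdot v (or_introl (conj Vv hvn)); rewrite hvn; nia.
Qed.

Section Enc.
Variable S : finType.
Definition enc (p : {ffun S -> nat}) : nat -> int :=
  fun i => oapp (fun j : 'I_#|S| => (p (enum_val j))%:Z) 0 (insub i).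

Lemma enc_ord p (j : 'I_#|S|) : enc p j = (p (enum_val j))%:Z.
Proof. by rewrite /enc valK. Qed.

Lemma sum_S (F : S -> int) : \sum_(a : S) F a = \sum_(i < #|S|) F (enum_val i).
Proof. by rewrite (reindex (@enum_val S S)) //; apply: onW_bij; apply: enum_val_bij. Qed.

Lemma sum_Sn (F : S -> nat) : (\sum_(a : S) F a = \sum_(i < #|S|) F (enum_val i))%N.
Proof. by rewrite (reindex (@enum_val S S)) //; apply: onW_bij; apply: enum_val_bij. Qed.

Lemma linval_dot (phi : nat -> int) p :
  linval (fun a => phi (enum_rank a)) p = dot #|S| phi (enc p).
Proof.
rewrite /linval sum_S /dot; apply: eq_bigr => i _.
by rewrite enum_valK enc_ord.
Qed.
End Enc.
Arguments enc {S} p _.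
Arguments linval_dot {S} phi p.
Arguments enc_ord {S} p j.

Lemma lift_PQ (S : finType) (P Q : {ffun S -> nat} -> Prop) (s : seq (nat -> int)) :
  (forall v, List.In v s -> (exists p, P p /\ v = enc p) \/
                            (exists q, Q q /\ v = (fun i => - enc q i))) ->
  exists t : seq ({ffun S -> nat} * bool),
   (forall pb, pb \in t -> if pb.2 then P pb.1 else Q pb.1) /\
   s = map (fun pb => if pb.2 then enc pb.1 else (fun i => - enc pb.1 i)) t.
Proof.
elim: s => [|x s IH] hs; first by exists [::].
have [t [ht ->]] : exists t : seq ({ffun S -> nat} * bool),
   (forall pb, pb \in t -> if pb.2 then P pb.1 else Q pb.1) /\
   s = map (fun pb => if pb.2 then enc pb.1 else (fun i => - enc pb.1 i)) t.
  by apply: IH => v hv; apply: hs; right.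
case: (hs x (or_introl erefl)) => [[p [Pp ->]]|[q [Qq ->]]].
  exists ((p, true) :: t); split => // pb; rewrite inE => /orP [/eqP -> //|]; exact: ht.
exists ((q, false) :: t); split => // pb; rewrite inE => /orP [/eqP -> //|]; exact: ht.
Qed.

Lemma sum_Posz (I : Type) (r : seq I) (Pr : pred I) (F : I -> nat) :
  \sum_(i <- r | Pr i) (F i)%:Z = (\sum_(i <- r | Pr i) F i)%N%:Z.
Proof. by rewrite (big_morph Posz PoszD erefl). Qed.

Theorem lemma8 :
  exists (c d : nat -> nat),
  forall (S : finType) (C7 : nat),
  exists C9 : nat,
    (C9 <= c #|S| * (C7.+1) ^ (d #|S|))%N /\
    forall (P Q : {ffun S -> nat} -> Prop),
      (forall p, P p -> forall a, (p a <= C7)%N) ->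
      (forall q, Q q -> forall a, (q a <= C7)%N) ->
      ~ P (zvec S) -> ~ Q (zvec S) ->
      (forall x : S -> rat, pcone P x -> pcone Q x -> forall a, x a = 0) ->
      exists phi : S -> int,
        (forall p, P p -> 0 < linval phi p) /\
        (forall q, Q q -> linval phi q < 0) /\
        (\sum_(a : S) `|phi a| <= C9)%N.
Proof.
exists cc, dd => S C7; exists (cc #|S| * C7.+1 ^ dd #|S|)%N; split => // P Q hP hQ nP nQ hcone.
pose V := fun v => (exists p, P p /\ v = enc p) \/ (exists q, Q q /\ v = (fun i => - enc q i)).
have hb : forall v, V v -> forall i, `|v i| <= C7%:Z.
  move=> v [[p [Pp ->]]|[q [Qq ->]]] i; rewrite /enc ?normrN; case: insub => [j|] //=.
    by rewrite ger0_norm // lez_nat; apply: hP.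
  by rewrite ger0_norm // lez_nat; apply: hQ.
have hc : forall s : seq (nat -> int), (forall v, List.In v s -> V v) -> s <> [::] ->
     exists i, (i < #|S|)%N /\ \sum_(v <- s) v i != 0.
  move=> s hs hne; apply: NNPP => hno.
  have hz : forall i, (i < #|S|)%N -> \sum_(v <- s) v i = 0.
    move=> i hi; apply/eqP; apply: NNPP => h; apply: hno; exists i; split => //.
    by apply/negP.
  have [t [ht hst]] := @lift_PQ S P Q s hs.
  subst s.
  pose NP := fun a => (\sum_(pb <- t | pb.2) pb.1 a)%N.
  pose NQ := fun a => (\sum_(pb <- t | ~~ pb.2) pb.1 a)%N.
  have eNPQ : forall a, NP a = NQ a.
    move=> a; have := hz (enum_rank a) (ltn_ord _).
    rewrite big_map (bigID (fun pb => pb.2)) /=.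
    rewrite (eq_bigr (fun pb : {ffun S -> nat} * bool => (pb.1 a)%:Z)); last first.
      by move=> pb ->; rewrite enc_ord enum_rankK.
    rewrite [X in _ + X](eq_bigr (fun pb : {ffun S -> nat} * bool => - (pb.1 a)%:Z)); last first.
      by move=> pb /negbTE ->; rewrite enc_ord enum_rankK.
    rewrite sumrN !sum_Posz /NP /NQ; lia.
  pose x := fun a : S => (NP a)%:R : rat.
  have cP : pcone P x.
    exists [seq (pb.1, 1%:Q) | pb <- t & pb.2]; split.
      move=> pa /mapP [pb]; rewrite mem_filter => /andP [h2 hin] ->; split => //=.
      by have := ht pb hin; rewrite h2.
    move=> a; rewrite big_map big_filter /x /NP natr_sum; apply: eq_bigr => pb _ /=.
    by rewrite mul1r.
  have cQ : pcone Q x.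
    exists [seq (pb.1, 1%:Q) | pb <- t & ~~ pb.2]; split.
      move=> pa /mapP [pb]; rewrite mem_filter => /andP [h2 hin] ->; split => //=.
      by have := ht pb hin; rewrite (negbTE h2).
    move=> a; rewrite big_map big_filter /x eNPQ /NQ natr_sum; apply: eq_bigr => pb _ /=.
    by rewrite mul1r.
  have h0 := hcone x cP cQ.
  have hall : forall a, (\sum_(pb <- t) pb.1 a = 0)%N.
    move=> a; rewrite (bigID (fun pb => pb.2)) /= -/(NP a) -/(NQ a) -eNPQ.
    by have /eqP := h0 a; rewrite /x pnatr_eq0 => /eqP ->.
  clear hz hs hno cP cQ h0 eNPQ x NP NQ; case: t ht hall hne => [//|pb t] ht hall _.
  have hz0 : pb.1 = zvec S.
    apply/ffunP => a; rewrite ffunE; have := hall a; rewrite big_cons; lia.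
  have := ht pb (mem_head _ _); case: pb.2; rewrite hz0; [exact: nP | exact: nQ].
have [phi [hphi hdot]] := @FM #|S| C7 V hb hc.
exists (fun a => phi (enum_rank a)); split; [|split].
- move=> p Pp; rewrite linval_dot.
  by have := hdot (enc p) (or_introl (ex_intro _ p (conj Pp erefl))); lia.
- move=> q Qq; have := hdot _ (or_intror (ex_intro _ q (conj Qq erefl))).
  have -> : dot #|S| phi (fun i => - enc q i) = - dot #|S| phi (enc q).
    by rewrite /dot -sumrN; apply: eq_bigr => i _; ring.
  rewrite linval_dot; lia.
- rewrite sum_Sn; under eq_bigr do rewrite enum_valK; exact: hphi.
Qed.
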